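(* Let $\lambda,\mu\in\mathbb{C}$ and let $L=\widetilde{L_{\lambda,\mu}}^1$; for $j\in\mathbb{Z}$ let $\Delta_{j+\frac12}(L)$ be the space of $\frac12$-derivations of $L$ of degree $j+\frac12$. (1) If $\mu\in\frac12+\mathbb{Z}$ and $\lambda\notin\{-3,-1,1\}$, then $\Delta_{j+\frac12}(L)=0$ for all $j\in\mathbb{Z}$. (2) If $\mu\notin\frac12\mathbb{Z}$, or $\mu\in\mathbb{Z}$ and $\lambda\neq-1$, then $\Delta_{j+\frac12}(L)=0$ for $\lambda\neq1$, while for $\lambda=1$, $\Delta_{j+\frac12}(\widetilde{L_{1,\mu}}^1)$ consists exactly of the maps $\varphi$ for which there is $\alpha\in\mathbb{C}$ with $\varphi(L_n)=\alpha Y_{n+j+\frac12}$ and $\varphi(Y_{n+\frac12})=\alpha M_{n+j+1}$ for all $n\in\mathbb{Z}$, and $\varphi(M_n)=0$, $\varphi(C_L)=0$.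
   Context: For $\lambda,\mu\in\mathbb{C}$, $\widetilde{L_{\lambda,\mu}}^1$ is the complex Lie algebra with basis $\{L_n,M_n,Y_{n+\frac12},C_L\mid n\in\mathbb{Z}\}$, $C_L$ central, and nonzero brackets $[L_m,L_n]=(n-m)L_{m+n}+\frac{m^3-m}{12}\delta_{m+n,0}C_L$, $[L_m,M_n]=(n-\lambda m+2\mu)M_{m+n}$, $[L_m,Y_{n+\frac12}]=(n+\frac12-\frac{\lambda+1}{2}m+\mu)Y_{m+n+\frac12}$, $[Y_{m+\frac12},Y_{n+\frac12}]=(n-m)M_{m+n+1}$. It is $\frac12\mathbb{Z}$-graded by $W_0=\langle L_0,M_0,C_L\rangle$, $W_n=\langle L_n,M_n\rangle$ ($n\neq0$), $W_{n+\frac12}=\langle Y_{n+\frac12}\rangle$. A $\frac12$-derivation is a linear map $\varphi$ with $\varphi([x,y])=\frac12([\varphi(x),y]+[x,\varphi(y)])$; it has degree $g$ if $\varphi(W_h)\subseteq W_{g+h}$ for all $h\in\frac12\mathbb{Z}$. *)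

(* Defs.v *)
(* The Lie algebra \widetilde{L_{lambda,mu}}^1 over C is
   modelled as the free C-vector space {malg CC[B]} (finitely supported
   functions B -> CC, from multinomials' monalg) on the basis B, with the
   Lie bracket obtained by bilinear extension of the bracket on basis
   elements. *)
From HB Require Import structures.
From mathcomp Require Import all_boot all_order all_algebra.
From mathcomp Require Import Rstruct complex.
From mathcomp Require Import finmap.
From mathcomp.multinomials Require Import monalg.

Set Implicit Arguments.
Unset Strict Implicit.
Unset Printing Implicit Defensive.
Import GRing.Theory Num.Theory.
Local Open Scope ring_scope.

Definition CC : Type := (Rdefinitions.R)[i].

(* The basis: BL n = L_n, BM n = M_n, BY n = Y_{n+1/2}, BC = C_L. *)
Inductive B := BL of int | BM of int | BY of int | BC.

Definition B_enc (b : B) : (int + int) + (int + unit) :=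
  match b with
  | BL n => inl (inl n) | BM n => inl (inr n)
  | BY n => inr (inl n) | BC => inr (inr tt) end.
Definition B_dec (s : (int + int) + (int + unit)) : B :=
  match s with
  | inl (inl n) => BL n | inl (inr n) => BM n
  | inr (inl n) => BY n | inr (inr _) => BC end.
Lemma B_encK : cancel B_enc B_dec. Proof. by case. Qed.
HB.instance Definition _ := Countable.copy B (can_type B_encK).

Definition L : Type := {malg CC[B]}.

Definition bv (b : B) : L := << b >>.

Definition brB (lam mu : CC) (a b : B) : L :=
  match a, b with
  | BL m, BL n => ((n - m)%:~R : CC) *: bv (BL (m + n))
                  + (if m + n == 0 then ((m ^+ 3 - m)%:~R / 12%:R : CC) *: bv BC
                     else 0)
  | BL m, BM n => (n%:~R - lam * m%:~R + 2%:R * mu) *: bv (BM (m + n))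
  | BM n, BL m => - ((n%:~R - lam * m%:~R + 2%:R * mu) *: bv (BM (m + n)))
  | BL m, BY n => (n%:~R + 2%:R^-1 - (lam + 1) / 2%:R * m%:~R + mu)
                    *: bv (BY (m + n))
  | BY n, BL m => - ((n%:~R + 2%:R^-1 - (lam + 1) / 2%:R * m%:~R + mu)
                    *: bv (BY (m + n)))
  | BY m, BY n => ((n - m)%:~R : CC) *: bv (BM (m + n + 1))
  | _, _ => 0
  end.

Definition br (lam mu : CC) (x y : L) : L :=
  \sum_(a <- finmap.enum_fset (msupp x)) \sum_(b <- finmap.enum_fset (msupp y)) (x@_a * y@_b) *: brB lam mu a b.

(* twice the (1/2 Z)-degree of a basis vector *)
Definition deg2 (b : B) : int :=
  match b with
  | BL n => 2 * n | BM n => 2 * n | BY n => 2 * n + 1 | BC => 0 end.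

Definition inW (h2 : int) (x : L) : Prop :=
  forall b : B, b \in finmap.enum_fset (msupp x) -> deg2 b = h2.

Definition has_degree2 (g2 : int) (phi : L -> L) : Prop :=
  forall (h2 : int) (x : L), inW h2 x -> inW (h2 + g2) (phi x).

Definition half_derivation (lam mu : CC) (phi : {linear L -> L}) : Prop :=
  forall x y : L, phi (br lam mu x y)
                  = 2%:R^-1 *: (br lam mu (phi x) y + br lam mu x (phi y)).

Definition in_Z (z : CC) : Prop := exists k : int, z = k%:~R.
Definition in_halfZ (z : CC) : Prop := exists k : int, z = k%:~R / 2%:R.
Definition in_half_plus_Z (z : CC) : Prop :=
  exists k : int, z = k%:~R + 2%:R^-1.

(* Main.v *)
Require Import Defs.
From HB Require Import structures.
From mathcomp Require Import all_boot all_order all_algebra.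
From mathcomp Require Import Rstruct complex.
From mathcomp Require Import finmap.
From mathcomp.multinomials Require Import monalg.
From mathcomp Require Import ring zify.
Import GRing.Theory Num.Theory.
Local Open Scope ring_scope.

Definition bvo := locked bv.
Lemma bvoE b : bv b = bvo b. Proof. by rewrite /bvo -lock. Qed.
Lemma bvE (a k : B) : (bvo a)@_k = (a == k)%:R.
Proof. by rewrite -bvoE /bv mcoeffU. Qed.
Lemma msupp_bv a : msupp (bvo a) = [fset a]%fset.
Proof. by rewrite -bvoE /bv msuppU oner_eq0. Qed.

Section Br.
Variables lam mu : CC.

Lemma brE {x y : L} {dx dy : {fset B}} : (msupp x `<=` dx)%fset -> (msupp y `<=` dy)%fset ->
  br lam mu x y = \sum_(a <- dx) \sum_(b <- dy) (x@_a * y@_b) *: brB lam mu a b.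
Proof.
move=> hx hy; rewrite /br.
rewrite (big_fset_incl _ hx); last first.
  move=> a _ ha; rewrite big1_seq // => b _.
  by rewrite (mcoeff_outdom ha) mul0r scale0r.
apply: eq_bigr => a _; apply: big_fset_incl => // b _ hb.
by rewrite (mcoeff_outdom hb) mulr0 scale0r.
Qed.

Lemma brDl (x y z : L) : br lam mu (x + y) z = br lam mu x z + br lam mu y z.
Proof.
set d := (msupp x `|` msupp y)%fset.
have hxy : (msupp (x + y) `<=` d)%fset by exact: msuppD_le.
rewrite (brE hxy (fsubset_refl _)) (brE (fsubsetUl _ _ : (msupp x `<=` d)%fset) (fsubset_refl _)).
rewrite (brE (fsubsetUr _ _ : (msupp y `<=` d)%fset) (fsubset_refl _)) -big_split /=.
apply: eq_bigr => a _; rewrite -big_split /=; apply: eq_bigr => b _.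
by rewrite mcoeffD mulrDl scalerDl.
Qed.

Lemma brDr (x y z : L) : br lam mu z (x + y) = br lam mu z x + br lam mu z y.
Proof.
set d := (msupp x `|` msupp y)%fset.
have hxy : (msupp (x + y) `<=` d)%fset by exact: msuppD_le.
rewrite (brE (fsubset_refl _) hxy) (brE (fsubset_refl _) (fsubsetUl _ _ : (msupp x `<=` d)%fset)).
rewrite (brE (fsubset_refl _) (fsubsetUr _ _ : (msupp y `<=` d)%fset)) -big_split /=.
apply: eq_bigr => a _; rewrite -big_split /=; apply: eq_bigr => b _.
by rewrite mcoeffD mulrDr scalerDl.
Qed.

Lemma brZl c (x z : L) : br lam mu (c *: x) z = c *: br lam mu x z.
Proof.
rewrite (brE (msuppZ_le c x) (fsubset_refl _)) (brE (fsubset_refl _) (fsubset_refl _)).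
rewrite scaler_sumr; apply: eq_bigr => a _; rewrite scaler_sumr; apply: eq_bigr => b _.
by rewrite mcoeffZ scalerA mulrA.
Qed.

Lemma brZr c (x z : L) : br lam mu z (c *: x) = c *: br lam mu z x.
Proof.
rewrite (brE (fsubset_refl _) (msuppZ_le c x)) (brE (fsubset_refl _) (fsubset_refl _)).
rewrite scaler_sumr; apply: eq_bigr => a _; rewrite scaler_sumr; apply: eq_bigr => b _.
by rewrite mcoeffZ scalerA mulrCA.
Qed.

Lemma br0l z : br lam mu 0 z = 0.
Proof. by move: (brZl 0 0 z); rewrite !scale0r. Qed.
Lemma br0r z : br lam mu z 0 = 0.
Proof. by move: (brZr 0 0 z); rewrite !scale0r. Qed.

Lemma br_bv a b : br lam mu (bvo a) (bvo b) = brB lam mu a b.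
Proof.
by rewrite /br !msupp_bv !big_seq_fset1 !bvE !eqxx mulr1 scale1r.
Qed.

Lemma br_suml I (s : seq I) (F : I -> L) y :
  br lam mu (\sum_(i <- s) F i) y = \sum_(i <- s) br lam mu (F i) y.
Proof.
elim: s => [|i s IH]; first by rewrite !big_nil br0l.
by rewrite !big_cons brDl IH.
Qed.
Lemma br_sumr I (s : seq I) (F : I -> L) y :
  br lam mu y (\sum_(i <- s) F i) = \sum_(i <- s) br lam mu y (F i).
Proof.
elim: s => [|i s IH]; first by rewrite !big_nil br0r.
by rewrite !big_cons brDr IH.
Qed.
End Br.

Lemma bv_expand_unused (x : L) : x = \sum_(a <- msupp x) x@_a *: bvo a.
Proof.
rewrite {1}(monalgE x); apply: eq_bigr => a _.
apply/malgP => k; by rewrite mcoeffZ bvE mcoeffU mulr_natr.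
Qed.

Lemma eqB_LL m n : (BL m == BL n) = (m == n). Proof. by apply/eqP/eqP => [[]|->]. Qed.
Lemma eqB_MM m n : (BM m == BM n) = (m == n). Proof. by apply/eqP/eqP => [[]|->]. Qed.
Lemma eqB_YY m n : (BY m == BY n) = (m == n). Proof. by apply/eqP/eqP => [[]|->]. Qed.
Lemma eqB_CC : (BC == BC) = true. Proof. exact: eqxx. Qed.
Lemma eqB_LM m n : (BL m == BM n) = false. Proof. by apply/eqP. Qed.
Lemma eqB_LY m n : (BL m == BY n) = false. Proof. by apply/eqP. Qed.
Lemma eqB_LC m : (BL m == BC) = false. Proof. by apply/eqP. Qed.
Lemma eqB_ML m n : (BM m == BL n) = false. Proof. by apply/eqP. Qed.
Lemma eqB_MY m n : (BM m == BY n) = false. Proof. by apply/eqP. Qed.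
Lemma eqB_MC m : (BM m == BC) = false. Proof. by apply/eqP. Qed.
Lemma eqB_YL m n : (BY m == BL n) = false. Proof. by apply/eqP. Qed.
Lemma eqB_YM m n : (BY m == BM n) = false. Proof. by apply/eqP. Qed.
Lemma eqB_YC m : (BY m == BC) = false. Proof. by apply/eqP. Qed.
Lemma eqB_CL m : (BC == BL m) = false. Proof. by apply/eqP. Qed.
Lemma eqB_CM m : (BC == BM m) = false. Proof. by apply/eqP. Qed.
Lemma eqB_CY m : (BC == BY m) = false. Proof. by apply/eqP. Qed.
Definition eqBE := (eqB_LL, eqB_MM, eqB_YY, eqB_CC, eqB_LM, eqB_LY, eqB_LC, eqB_ML,
  eqB_MY, eqB_MC, eqB_YL, eqB_YM, eqB_YC, eqB_CL, eqB_CM, eqB_CY).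

Lemma coef0 {h} {v : L} {k} : inW h v -> deg2 k <> h -> v@_k = 0.
Proof.
move=> hv hk; apply/eqP; rewrite mcoeff_eq0; apply/negP => /hv; exact: hk.
Qed.

Lemma inW_bv b : inW (deg2 b) (bvo b).
Proof. by move=> k; rewrite msupp_bv => /fset1P ->. Qed.



Definition eqBb (a b : B) : bool :=
  match a, b with
  | BL m, BL n => m == n | BM m, BM n => m == n | BY m, BY n => m == n
  | BC, BC => true | _, _ => false end.
Lemma eqBbE a b : eqBb a b = (a == b).
Proof. by case: a => [m|m|m|]; case: b => [n|n|n|] /=; rewrite ?eqBE. Qed.

Fixpoint comb (s : seq (CC * B)) : L :=
  match s with [::] => 0 | x :: s' => x.1 *: bvo x.2 + comb s' end.
Fixpoint cf (s : seq (CC * B)) (k : B) : CC :=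
  match s with [::] => 0 | x :: s' => (if eqBb x.2 k then x.1 else 0) + cf s' k end.

Lemma comb_coef s k : (comb s)@_k = cf s k.
Proof.
(elim: s => [|[c b] s IH] /=; first exact: mcoeff0;
rewrite mcoeffD; congr (_ + _); last exact: IH;
by rewrite mcoeffZ bvE eqBbE; case: (b == k); rewrite ?mulr1 ?mulr0). Qed.

Definition scl (c : CC) (s : seq (CC * B)) := map (fun x => (c * x.1, x.2)) s.

Lemma comb_cat s1 s2 : comb (s1 ++ s2) = comb s1 + comb s2.
Proof. elim: s1 => [|x s1 IH] /=; first by rewrite add0r. by rewrite IH addrA. Qed.

Lemma comb_scl c s : comb (scl c s) = c *: comb s.
Proof.
elim: s => [|x s IH] /=; first by rewrite scaler0.
by rewrite IH scalerDr scalerA.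
Qed.

Lemma comb1 x : comb [:: x] = x.1 *: bvo x.2.
Proof. by rewrite /= addr0. Qed.
Lemma comb2 x y : comb [:: x; y] = x.1 *: bvo x.2 + y.1 *: bvo y.2.
Proof. by rewrite /=; congr (_ + _); exact: addr0. Qed.

Lemma comb_bv b : bvo b = comb [:: (1, b)].
Proof. by rewrite /= scale1r addr0. Qed.

Section BrL.
Variables lam mu : CC.

Definition brBl (a b : B) : seq (CC * B) :=
  match a, b with
  | BL m, BL n => [:: (((n - m)%:~R : CC), BL (m + n));
                      ((if m + n == 0 then ((m ^+ 3 - m)%:~R / 12%:R : CC) else 0), BC)]
  | BL m, BM n => [:: (n%:~R - lam * m%:~R + 2%:R * mu, BM (m + n))]
  | BM n, BL m => [:: (- (n%:~R - lam * m%:~R + 2%:R * mu), BM (m + n))]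
  | BL m, BY n => [:: (n%:~R + 2%:R^-1 - (lam + 1) / 2%:R * m%:~R + mu, BY (m + n))]
  | BY n, BL m => [:: (- (n%:~R + 2%:R^-1 - (lam + 1) / 2%:R * m%:~R + mu), BY (m + n))]
  | BY m, BY n => [:: (((n - m)%:~R : CC), BM (m + n + 1))]
  | _, _ => [::]
  end.

Lemma brBl_ok a b : brB lam mu a b = comb (brBl a b).
Proof.
case: a => [m|m|m|]; case: b => [n|n|n|]; rewrite /brBl ?comb1 ?comb2 /brB /bvo -?lock //.
- by congr (_ + _); case: (m + n == 0) => //; rewrite scale0r.
- by rewrite scaleNr.
- by rewrite scaleNr.
Qed.

Definition brS (s1 s2 : seq (CC * B)) : seq (CC * B) :=
  flatten [seq flatten [seq scl (x.1 * y.1) (brBl x.2 y.2) | y <- s2] | x <- s1].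

Lemma br_comb s1 s2 : br lam mu (comb s1) (comb s2) = comb (brS s1 s2).
Proof.
rewrite /brS; elim: s1 => [|x s1 IH] /=; first by rewrite br0l.
rewrite comb_cat brDl IH; congr (_ + _); clear IH.
elim: s2 => [|y s2 IH2] /=; first by rewrite br0r.
rewrite comb_cat brDr IH2; congr (_ + _).
by rewrite brZl brZr br_bv brBl_ok comb_scl scalerA mulrC.
Qed.
End BrL.

Lemma comb_cf s1 s2 : comb s1 = comb s2 -> forall k, cf s1 k = cf s2 k.
Proof. by move=> e k; rewrite -!comb_coef e. Qed.

Lemma lin0 {x y : CC} (c : CC) {z : CC} : x = y -> z = c * (x - y) -> z = 0.
Proof. by move=> -> ->; rewrite subrr mulr0. Qed.

Lemma eq_via {x y x' y' : CC} : x = y -> x' - y' = x - y -> x' = y'.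
Proof. by move=> -> /eqP; rewrite subrr subr_eq0 => /eqP. Qed.

Ltac decide_int := repeat match goal with
 | |- context [(?x == ?y)] =>
    first [ let E := fresh in (have E : (x == y) = true; [by apply/eqP; lia|]);
              rewrite E; clear E
          | let E := fresh in (have E : (x == y) = false; [by apply/eqP; lia|]);
              rewrite E; clear E ]
 end.


Section Main.
Variables (lam mu : CC) (j : int) (phi : {linear L -> L}).
Hypothesis hder : half_derivation lam mu phi.
Hypothesis hdeg : has_degree2 (2 * j + 1) phi.

Definition Ac n := (phi (bvo (BL n)))@_(BY (n + j)).
Definition Bc n := (phi (bvo (BM n)))@_(BY (n + j)).
Definition Cc n := (phi (bvo (BY n)))@_(BL (n + j + 1)).
Definition Dc n := (phi (bvo (BY n)))@_(BM (n + j + 1)).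
Definition Ec n := (phi (bvo (BY n)))@_BC.
Definition Fc := (phi (bvo BC))@_(BY j).

Definition phiL (b : B) : seq (CC * B) :=
  match b with
  | BL n => [:: (Ac n, BY (n + j))]
  | BM n => [:: (Bc n, BY (n + j))]
  | BY n => [:: (Cc n, BL (n + j + 1)); (Dc n, BM (n + j + 1)); (Ec n, BC)]
  | BC => [:: (Fc, BY j)]
  end.

Definition phiS (s : seq (CC * B)) := flatten [seq scl x.1 (phiL x.2) | x <- s].

Ltac cfsimpl := cbn [cf phiS phiL brBl brS scl flatten map cat foldr eqBb fst snd].

Lemma shape1 {v : L} {h b} : inW h v -> deg2 b = h ->
  (forall k, deg2 k = h -> k = b) -> v = comb [:: (v@_b, b)].
Proof.
move=> hv hb hk; rewrite comb1; apply/malgP => k; rewrite mcoeffZ bvE.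
have [<-|ne] := eqVneq b k; first by rewrite mulr1.
rewrite mulr0; apply: (coef0 hv) => e; move/hk: e => e; by rewrite e eqxx in ne.
Qed.

Lemma hphi b : inW (deg2 b + (2 * j + 1)) (phi (bvo b)).
Proof. exact/hdeg/inW_bv. Qed.

Lemma phi_bv b : phi (bvo b) = comb (phiL b).
Proof.
case: b => [n|n|n|].
- apply: (shape1 (hphi (BL n))); first by cbn [deg2]; lia.
  by case=> [m|m|m|]; cbn [deg2] => e; try lia; congr BY; lia.
- apply: (shape1 (hphi (BM n))); first by cbn [deg2]; lia.
  by case=> [m|m|m|]; cbn [deg2] => e; try lia; congr BY; lia.
- rewrite /phiL /Cc /Dc /Ec.
  move: (phi (bvo (BY n))) (hphi (BY n)) => v h.
  apply/malgP => k; rewrite comb_coef; case: k => [m|m|m|]; cbn [cf eqBb fst snd].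
  + case: (eqVneq (n + j + 1) m) => [<-|ne] /=; first by ring.
    rewrite (coef0 h); [ring | cbn [deg2]; lia].
  + case: (eqVneq (n + j + 1) m) => [<-|ne] /=; first by ring.
    rewrite (coef0 h); [ring | cbn [deg2]; lia].
  + rewrite (coef0 h); [ring | cbn [deg2]; lia].
  + ring.
- apply: (shape1 (hphi BC)); first by cbn [deg2]; lia.
  by case=> [m|m|m|]; cbn [deg2] => e; try lia; congr BY; lia.
Qed.

Lemma EcE n : n + j + 1 != 0 -> Ec n = 0.
Proof. move=> ne; apply: (coef0 (hphi (BY n))); cbn [deg2]; lia. Qed.

Lemma phi_comb s : phi (comb s) = comb (phiS s).
Proof.
elim: s => [|x s IH]; first by rewrite /= linear0.
rewrite /= linearD linearZ /= IH phi_bv comb_cat comb_scl //.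
Qed.

Lemma hder_cf a b k :
  cf (phiS (brBl lam mu a b)) k =
  cf (scl 2%:R^-1 (brS lam mu (phiL a) [:: (1, b)] ++ brS lam mu [:: (1, a)] (phiL b))) k.
Proof.
apply: comb_cf.
have H := hder (bvo a) (bvo b).
rewrite (br_bv lam mu a b) (brBl_ok lam mu a b) phi_comb in H.
rewrite (phi_bv a) (phi_bv b) (comb_bv a) (comb_bv b) in H.
rewrite (br_comb lam mu (phiL a)) (br_comb lam mu [:: (1, a)]) in H.
rewrite -comb_cat -comb_scl in H.
exact: H.
Qed.

Definition qq (m n : int) : CC := n%:~R + 2%:R^-1 - (lam + 1) / 2%:R * m%:~R + mu.
Definition pp (m n : int) : CC := n%:~R - lam * m%:~R + 2%:R * mu.

Ltac derive a b k := have := hder_cf a b k; cfsimpl; decide_int; cbn iota;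
  let H := fresh "H" in intro H; apply: (eq_via H); rewrite /qq /pp; ring.

Lemma E_LY_L m n : qq m n * Cc (m + n) = 2%:R^-1 * (Cc n * (n + j + 1 - m)%:~R).
Proof. derive (BL m) (BY n) (BL (m + n + j + 1)). Qed.

Lemma E_LY_M m n : qq m n * Dc (m + n) =
  2%:R^-1 * (Ac m * (n - (m + j))%:~R + Dc n * pp m (n + j + 1)).
Proof. derive (BL m) (BY n) (BM (m + n + j + 1)). Qed.

Lemma E_LY_C m n : qq m n * Ec (m + n) =
  2%:R^-1 * (Cc n * (if m + (n + j + 1) == 0 then ((m ^+ 3 - m)%:~R / 12%:R : CC) else 0)).
Proof. derive (BL m) (BY n) BC. Qed.

Lemma E_MY m n : 0 = 2%:R^-1 * (Bc m * (n - (m + j))%:~R - Cc n * pp (n + j + 1) m).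
Proof. derive (BM m) (BY n) (BM (m + j + n + 1)). Qed.

Lemma E_CY : 0 = 2%:R^-1 * Fc.
Proof. derive BC (BY (j + 1)) (BM (j + (j + 1) + 1)). Qed.

Lemma E_LL : (1 - 0)%:~R * Ac (0 + 1) = 2%:R^-1 * (Ac 1 * qq 0 (1 + j) - Ac 0 * qq 1 (0 + j)).
Proof. derive (BL 0) (BL 1) (BY (1 + j)). Qed.


Hypothesis Hc : lam != - 3%:R \/ (forall k : int, mu != k%:~R + 2%:R^-1).

Lemma qq_pair (m n m' n' : int) : m' = m + 1 -> n' = n - 1 ->
  qq m n = 0 -> qq m' n' = 0 -> False.
Proof.
move=> -> -> h1 h2.
have hl : lam + 3%:R = 0.
  apply: (@lin0 (qq m n - qq (m + 1) (n - 1)) 0 2); first by rewrite h1 h2 subrr.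
  rewrite /qq; by field.
have hm : mu = (- (n + m) - 1)%:~R + 2%:R^-1.
  apply/eqP; rewrite -subr_eq0; apply/eqP.
  apply: (@lin0 (qq m n + (lam + 3%:R) * m%:~R / 2%:R) 0 1).
    by rewrite h1 hl mul0r mul0r addr0.
  rewrite /qq; by field.
case: Hc => [/eqP|/(_ (- (n + m) - 1))/eqP]; last by [].
by apply; apply/eqP; rewrite -subr_eq0 opprK; apply/eqP.
Qed.

Lemma FcZ : Fc = 0.
Proof.
have h := E_CY; apply: (lin0 (2%:R) (esym h)); by field.
Qed.

Lemma CcT n : Cc n * ((n - j)%:~R + 2%:R * mu) = 0.
Proof.
have h := E_LY_L 0 n; rewrite (add0r n) in h.
apply: (lin0 2%:R h); rewrite /qq; by field.
Qed.

Lemma CcZ n : Cc n = 0.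
Proof.
have [ht|ht] := eqVneq ((n - j)%:~R + 2%:R * mu : CC) 0; last first.
  by move/eqP: (CcT n); rewrite mulf_eq0 (negbTE ht) orbF => /eqP.
have hT k : k != 0 -> Cc (k + n) = 0.
  move=> hk; move/eqP: (CcT (k + n)); rewrite mulf_eq0 => /orP[/eqP //|].
  have -> : ((k + n - j)%:~R + 2%:R * mu : CC) = k%:~R + ((n - j)%:~R + 2%:R * mu).
    by rewrite !intrD !intrN; ring.
  by rewrite ht addr0 intr_eq0 (negbTE hk).
have h1 := E_LY_L 1 n; have h2 := E_LY_L 2 n.
rewrite hT // mulr0 in h1; rewrite hT // mulr0 in h2.
have e1 : Cc n * (n + j)%:~R = 0.
  apply: (lin0 2%:R (esym h1)); by field.
have e2 : Cc n * (n + j - 1)%:~R = 0.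
  apply: (lin0 2%:R (esym h2)); by field.
have [hz|hz] := eqVneq (n + j) 0.
  move/eqP: e2; rewrite mulf_eq0 intr_eq0 => /orP[/eqP //|/eqP]; lia.
move/eqP: e1; rewrite mulf_eq0 intr_eq0 (negbTE hz) orbF => /eqP //.
Qed.
Lemma E_LY_MN m n N : m + n = N -> qq m n * Dc N =
  2%:R^-1 * (Ac m * (n - (m + j))%:~R + Dc n * pp m (n + j + 1)).
Proof. by move=> <-; exact: E_LY_M. Qed.

Lemma E_LY_CN m n N : m + n = N -> qq m n * Ec N =
  2%:R^-1 * (Cc n * (if m + (n + j + 1) == 0 then ((m ^+ 3 - m)%:~R / 12%:R : CC) else 0)).
Proof. by move=> <-; exact: E_LY_C. Qed.

Lemma BcZ m : Bc m = 0.
Proof.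
have h := E_MY m (m + j + 1); rewrite CcZ in h.
apply: (lin0 (- 2%:R) h); rewrite /pp; by field.
Qed.

Lemma DcE (n : int) : n != j -> Dc n = Ac 0.
Proof.
move=> hn; have h := E_LY_MN 0 n n (add0r n); rewrite (add0r j) in h.
have e : (n - j)%:~R * (Dc n - Ac 0) = 0.
  apply: (lin0 2%:R h); rewrite /qq /pp; by field.
move/eqP: e; rewrite mulf_eq0 intr_eq0 !subr_eq0 => /orP[/eqP|/eqP //]; lia.
Qed.

Lemma AcE m : Ac m = Ac 0.
Proof.
have [d [hd1 hd2 hd3]] : exists d : int, [/\ d != 0, d != m & d != - m].
  have [hm|hm] := boolP ((m == 1) || (m == -1)).
    by exists 2; split; apply/eqP; move: hm => /orP[/eqP|/eqP] hm; lia.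
  by exists 1; split; apply/eqP; move: hm; rewrite negb_or => /andP[/eqP ? /eqP ?]; lia.
have h := E_LY_MN m (j + d) (m + (j + d)) (erefl _).
rewrite (DcE (m + (j + d))) ?(DcE (j + d)) in h; try by apply/eqP; lia.
have e : (d - m)%:~R * (Ac m - Ac 0) = 0.
  apply: (lin0 (- 2%:R) h); rewrite /qq /pp; by field.
move/eqP: e; rewrite mulf_eq0 intr_eq0 !subr_eq0 => /orP[/eqP|/eqP //]; lia.
Qed.

Lemma AcL : Ac 0 * (1 - lam) = 0.
Proof.
have h := E_LL; rewrite (AcE (0 + 1)) ?(AcE 1) in h.
apply: (lin0 4%:R h); rewrite /qq; by field.
Qed.

Lemma DcjT (m : int) : m != 0 -> qq m (j - m) * (Dc j - Ac 0) = 0.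
Proof.
move=> hm; have h := E_LY_MN m (j - m) j (etrans (addrC _ _) (subrK _ _)).
rewrite (AcE m) (DcE (j - m)) in h; last by apply/eqP; lia.
apply: (lin0 1 h); rewrite /qq /pp; by field.
Qed.

Lemma DcjE : Dc j = Ac 0.
Proof.
have [e|ne] := eqVneq (Dc j - Ac 0) 0; first by apply/eqP; rewrite -subr_eq0 e.
have h1 := DcjT 1 isT; have h2 := DcjT 2 isT.
move/eqP: h1; rewrite mulf_eq0 (negbTE ne) orbF => /eqP h1.
move/eqP: h2; rewrite mulf_eq0 (negbTE ne) orbF => /eqP h2.
have e : j - 2 = j - 1 - 1 by ring.
by case: (@qq_pair 1 (j - 1) 2 (j - 2) (erefl _) e h1 h2).
Qed.

Lemma EcZ n : Ec n = 0.
Proof.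
have h0 := E_LY_CN 0 n n (add0r n); have h1 := E_LY_CN 1 (n - 1) n (etrans (addrC _ _) (subrK _ _)).
rewrite CcZ in h0; rewrite CcZ in h1.
have e0 : qq 0 n * Ec n = 0 by apply: (lin0 1 h0); ring.
have e1 : qq 1 (n - 1) * Ec n = 0 by apply: (lin0 1 h1); ring.
have [//|ne] := eqVneq (Ec n) 0.
move/eqP: e0; rewrite mulf_eq0 (negbTE ne) orbF => /eqP e0.
move/eqP: e1; rewrite mulf_eq0 (negbTE ne) orbF => /eqP e1.
by case: (@qq_pair 0 n 1 (n - 1) (erefl _) (erefl _) e0 e1).
Qed.
Lemma DcA n : Dc n = Ac 0.
Proof. by have [->|ne] := eqVneq n j; [exact: DcjE | exact: DcE]. Qed.

Lemma comb_ext s1 s2 : (forall k, cf s1 k = cf s2 k) -> comb s1 = comb s2.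
Proof. by move=> h; apply/malgP => k; rewrite !comb_coef. Qed.

Lemma basisL n : phi (bvo (BL n)) = Ac 0 *: bvo (BY (n + j)).
Proof. by rewrite phi_bv /phiL comb1 /= (AcE n). Qed.

Lemma basisM n : phi (bvo (BM n)) = 0.
Proof. by rewrite phi_bv /phiL comb1 /= (BcZ n) scale0r. Qed.

Lemma basisC : phi (bvo BC) = 0.
Proof. by rewrite phi_bv /phiL comb1 /= FcZ scale0r. Qed.

Lemma basisY_ n : phi (bvo (BY n)) = Ac 0 *: bvo (BM (n + j + 1)).
Proof.
rewrite phi_bv /phiL (CcZ n) (EcZ n) (DcA n).
rewrite (_ : Ac 0 *: bvo (BM (n + j + 1)) = comb [:: (Ac 0, BM (n + j + 1))]); last by rewrite comb1.
apply: comb_ext => k.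
cbn [cf fst snd].
by case: (eqBb (BL (n + j + 1)) k); case: (eqBb (BM (n + j + 1)) k); case: (eqBb BC k) => /=; ring.
Qed.

Lemma forward_all :
  [/\ (forall n, phi (bvo (BL n)) = Ac 0 *: bvo (BY (n + j))),
      (forall n, phi (bvo (BY n)) = Ac 0 *: bvo (BM (n + j + 1))),
      (forall n, phi (bvo (BM n)) = 0),
      phi (bvo BC) = 0 &
      Ac 0 * (1 - lam) = 0].
Proof. split; [exact: basisL | exact: basisY_ | exact: basisM | exact: basisC | exact: AcL]. Qed.
End Main.

Definition phiSP (P : B -> seq (CC * B)) (s : seq (CC * B)) :=
  flatten [seq scl x.1 (P x.2) | x <- s].

Lemma phi_combP (phi : {linear L -> L}) P :
  (forall b, phi (bvo b) = comb (P b)) -> forall s, phi (comb s) = comb (phiSP P s).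
Proof.
move=> hP; elim => [|x s IH]; first by rewrite /= linear0.
rewrite /= linearD linearZ /= IH hP comb_cat comb_scl //.
Qed.

Definition ex (x : L) : seq (CC * B) := [seq (x@_a, a) | a <- finmap.enum_fset (msupp x)].

Lemma cf_map (f : B -> CC) s k : uniq s ->
  cf [seq (f a, a) | a <- s] k = if k \in s then f k else 0.
Proof.
elim: s => [|a s IH] //= /andP[an us]; rewrite IH // in_cons eqBbE.
case: (eqVneq a k) => [<-|ne] /=; first by rewrite (negbTE an) addr0.
by rewrite add0r.
Qed.

Lemma comb_ex x : comb (ex x) = x.
Proof.
apply/malgP => k; rewrite comb_coef cf_map ?fset_uniq //.
case: ifP => // /negbT h; by rewrite mcoeff_outdom.
Qed.

Lemma cf_deg s H k : all (fun p => deg2 p.2 == H) s -> cf s k != 0 -> deg2 k = H.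
Proof.
elim: s => [|[c b] s IH] /=; first by rewrite eqxx.
move=> /andP[/eqP hb hs]; rewrite eqBbE.
case: (eqVneq b k) => [<- //|ne] /=; rewrite add0r; exact: IH.
Qed.

Definition wsum (s : seq (CC * B)) (g : B -> CC) := \sum_(z <- s) z.1 * g z.2.

Lemma cf_wsum s k : cf s k = wsum s (fun b => if eqBb b k then 1 else 0).
Proof.
rewrite /wsum; elim: s => [|[c b] s IH] /=; first by rewrite big_nil.
by rewrite big_cons IH /=; case: (eqBb b k); rewrite ?mulr1 ?mulr0.
Qed.

Lemma wsum_cat s t g : wsum (s ++ t) g = wsum s g + wsum t g.
Proof. by rewrite /wsum big_cat. Qed.

Lemma wsum_scl c s g : wsum (scl c s) g = c * wsum s g.
Proof.
rewrite /wsum /scl big_map mulr_sumr; apply: eq_bigr => z _ /=; by rewrite mulrA.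
Qed.

Lemma sum_flat (F : CC * B -> seq (CC * B)) (G : CC * B -> CC) s :
  \sum_(u <- flatten [seq F x | x <- s]) G u = \sum_(x <- s) \sum_(u <- F x) G u.
Proof.
elim: s => [|x s IH] /=; first by rewrite !big_nil.
by rewrite big_cat IH big_cons.
Qed.

Lemma sum_phiSP P (G : CC * B -> CC) s :
  \sum_(u <- phiSP P s) G u = \sum_(x <- s) \sum_(u <- P x.2) G (x.1 * u.1, u.2).
Proof. by rewrite /phiSP sum_flat; apply: eq_bigr => x _; rewrite /scl big_map. Qed.

Lemma wsum_brS lam mu s1 s2 g : wsum (brS lam mu s1 s2) g =
  \sum_(x <- s1) \sum_(y <- s2) x.1 * y.1 * wsum (brBl lam mu x.2 y.2) g.
Proof.
rewrite /wsum /brS sum_flat; apply: eq_bigr => x _.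
rewrite sum_flat; apply: eq_bigr => y _.
by rewrite /scl big_map mulr_sumr; apply: eq_bigr => z _ /=; rewrite mulrA.
Qed.

Ltac decide_int2 := repeat match goal with
 | |- context [(?x == ?y)] =>
    first [ let E := fresh in (have E : (x == y) = true; [by apply/eqP; lia|]);
              rewrite E; clear E
          | let E := fresh in (have E : (x == y) = false; [by apply/eqP; lia|]);
              rewrite E; clear E ]
 end.

Ltac kcase k := repeat match goal with
 | |- context [(?x == k)] =>
     let e := fresh "e" in
     have [e|e] := eqVneq x k; [subst k | rewrite ?(negbTE e)]
 end.

Section Back.
Variables (mu alpha : CC) (j : int) (phi : {linear L -> L}).

Definition P1 (b : B) : seq (CC * B) :=
  match b with
  | BL n => [:: (alpha, BY (n + j))]
  | BY n => [:: (alpha, BM (n + j + 1))]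
  | _ => [::]
  end.

Ltac fin k := cbn [cf phiSP P1 brBl brS scl flatten map cat foldr eqBb fst snd];
  kcase k; first [by exfalso; lia | decide_int2; cbn iota; by field].
Ltac finC := cbn [cf phiSP P1 brBl brS scl flatten map cat foldr eqBb fst snd];
  decide_int2; cbn iota; by field.

Lemma basis_back a b k :
  cf (phiSP P1 (brBl 1 mu a b)) k =
  2%:R^-1 * (cf (brS 1 mu (P1 a) [:: (1, b)]) k + cf (brS 1 mu [:: (1, a)] (P1 b)) k).
Proof.
case: a => [m|m|m|]; case: b => [n|n|n|];
  (case: k => [k|k|k|]; [fin k|fin k|fin k|finC]).
Qed.

Definition dk (k : B) := fun b => if eqBb b k then (1 : CC) else 0.
Lemma cf_wsumd s k : cf s k = wsum s (dk k).
Proof. exact: cf_wsum. Qed.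

Lemma wsum_phiSP P s g : wsum (phiSP P s) g = wsum s (fun b => wsum (P b) g).
Proof.
rewrite /wsum sum_phiSP; apply: eq_bigr => x _; rewrite mulr_sumr.
by apply: eq_bigr => u _ /=; rewrite mulrA.
Qed.

Lemma basis_w a b k :
  wsum (brBl 1 mu a b) (fun c => wsum (P1 c) (dk k)) =
  2%:R^-1 * (\sum_(x <- P1 a) x.1 * 1 * wsum (brBl 1 mu x.2 b) (dk k)
            + \sum_(y <- P1 b) 1 * y.1 * wsum (brBl 1 mu a y.2) (dk k)).
Proof.
have := basis_back a b k; rewrite !cf_wsumd wsum_phiSP !wsum_brS => ->.
congr (_ * (_ + _)).
  by apply: eq_bigr => x _; rewrite big_seq1.
by rewrite big_seq1.
Qed.

Hypothesis hP : forall b, phi (bvo b) = comb (P1 b).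

Lemma back_hder : half_derivation 1 mu phi.
Proof.
move=> x y.
rewrite -(comb_ex x) -(comb_ex y).
move: (ex x) (ex y) => sx sy; clear x y.
rewrite (br_comb 1 mu sx sy) !(phi_combP _ _ hP).
rewrite (br_comb 1 mu (phiSP P1 sx) sy) (br_comb 1 mu sx (phiSP P1 sy)).
rewrite -comb_cat -comb_scl; apply: comb_ext => k.
rewrite !cf_wsumd wsum_scl wsum_cat wsum_phiSP wsum_brS.
have e1 : wsum (brS 1 mu (phiSP P1 sx) sy) (dk k) = \sum_(x <- sx) \sum_(y <- sy)
   x.1 * y.1 * \sum_(u <- P1 x.2) u.1 * 1 * wsum (brBl 1 mu u.2 y.2) (dk k).
  rewrite wsum_brS sum_phiSP; apply: eq_bigr => x _.
  rewrite exchange_big /=; apply: eq_bigr => y _.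
  by rewrite mulr_sumr; apply: eq_bigr => u _ /=; ring.
have e2 : wsum (brS 1 mu sx (phiSP P1 sy)) (dk k) = \sum_(x <- sx) \sum_(y <- sy)
   x.1 * y.1 * \sum_(v <- P1 y.2) 1 * v.1 * wsum (brBl 1 mu x.2 v.2) (dk k).
  rewrite wsum_brS; apply: eq_bigr => x _.
  rewrite sum_phiSP; apply: eq_bigr => y _ /=.
  by rewrite mulr_sumr; apply: eq_bigr => v _ /=; ring.
rewrite e1 e2 -big_split mulr_sumr; apply: eq_bigr => x _.
rewrite -big_split mulr_sumr; apply: eq_bigr => y _ /=.
rewrite basis_w; ring.
Qed.

Lemma all_phiSP s H : all (fun p => deg2 p.2 == H) s ->
  all (fun p => deg2 p.2 == H + (2 * j + 1)) (phiSP P1 s).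
Proof.
elim: s => [|[c b] s IH] //= /andP[/eqP hb hs].
rewrite all_cat IH // andbT /scl all_map.
case: b hb => [n|n|n|] /= hb; rewrite ?andbT //; apply/eqP; cbn [deg2]; lia.
Qed.

Lemma back_deg : has_degree2 (2 * j + 1) phi.
Proof.
move=> h2 x hx k.
rewrite -(comb_ex x) (phi_combP _ _ hP) => hk.
have hk' : k \in msupp (comb (phiSP P1 (ex x))) := hk.
rewrite -mcoeff_neq0 comb_coef in hk'.
apply: (@cf_deg (phiSP P1 (ex x)) (h2 + (2 * j + 1)) k _ hk'); apply: all_phiSP.
rewrite /ex all_map; apply/allP => a ha /=; apply/eqP; exact: hx.
Qed.
End Back.

Lemma phiSP_nil s : phiSP (fun _ => [::]) s = [::].
Proof. by elim: s. Qed.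

Lemma zero_all (phi : {linear L -> L}) : (forall b, phi (bvo b) = 0) -> forall x, phi x = 0.
Proof.
move=> h x; rewrite -(comb_ex x) (phi_combP phi (fun _ => [::])) ?phiSP_nil //.
Qed.

Lemma one_neq_m3 : (1 : CC) != - 3%:R.
Proof.
apply/eqP => h.
have h4 : (4%:R : CC) = 1 - (- 3%:R) by ring.
by move: h4; rewrite -h subrr => /eqP; rewrite pnatr_eq0.
Qed.


Lemma Hc_of2 (lam mu : CC) : (~ in_halfZ mu \/ (in_Z mu /\ lam != - 1)) ->
  forall k : int, mu != k%:~R + 2%:R^-1.
Proof.
move=> H2 k; apply/eqP => hmu; case: H2 => [nh|[[z hz] _]].
  apply: nh; exists (2 * k + 1); rewrite hmu intrD intrM; by field.
have e : ((2 * (z - k) - 1)%:~R : CC) = 2%:R * (z%:~R - (k%:~R + 2%:R^-1)).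
  rewrite intrB intrM intrB; by field.
rewrite -hz hmu subrr mulr0 in e.
by move/eqP: e; rewrite intr_eq0 => /eqP; lia.
Qed.

Lemma zero_case (lam mu : CC) (j : int) (phi : {linear L -> L}) :
  lam != 1 -> (lam != - 3%:R \/ (forall k : int, mu != k%:~R + 2%:R^-1)) ->
  half_derivation lam mu phi -> has_degree2 (2 * j + 1) phi -> forall x, phi x = 0.
Proof.
move=> hl Hc hd hg.
have [hL hY hM hC hA] := @forward_all _ _ _ _ hd hg Hc.
have hA0 : Ac j phi 0 = 0.
  move/eqP: hA; rewrite mulf_eq0 subr_eq0 => /orP[/eqP //|/eqP e].
  by move: hl; rewrite -e eqxx.
apply: zero_all; case=> [n|n|n|].
- by rewrite hL hA0 scale0r.
- exact: hM.
- by rewrite hY hA0 scale0r.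
- exact: hC.
Qed.

Theorem mainTheorem6 (lam mu : CC) (j : int) :
  (* (1) *)
  (in_half_plus_Z mu -> lam != - 3%:R -> lam != - 1 -> lam != 1 ->
     forall phi : {linear L -> L},
       half_derivation lam mu phi -> has_degree2 (2 * j + 1) phi ->
       forall x : L, phi x = 0)
  /\
  (* (2) *)
  ((~ in_halfZ mu \/ (in_Z mu /\ lam != - 1)) ->
     (lam != 1 ->
        forall phi : {linear L -> L},
          half_derivation lam mu phi -> has_degree2 (2 * j + 1) phi ->
          forall x : L, phi x = 0)
     /\
     (lam = 1 ->
        forall phi : {linear L -> L},
          (half_derivation lam mu phi /\ has_degree2 (2 * j + 1) phi) <->
          (exists alpha : CC,
              (forall n : int, phi (bv (BL n)) = alpha *: bv (BY (n + j)))
           /\ (forall n : int, phi (bv (BY n)) = alpha *: bv (BM (n + j + 1)))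
           /\ (forall n : int, phi (bv (BM n)) = 0)
           /\ phi (bv BC) = 0))).
Proof.
split.
  move=> _ h3 _ h1 phi hd hg; exact: (@zero_case _ _ _ _ h1 (or_introl h3) hd hg).
move=> H2; have Hc := @Hc_of2 _ _ H2; split.
  move=> h1 phi hd hg; exact: (@zero_case _ _ _ _ h1 (or_intror Hc) hd hg).
move=> -> phi; split.
  case=> hd hg.
  have [hL hY hM hC _] := @forward_all _ _ _ _ hd hg (or_introl one_neq_m3).
  exists (Ac j phi 0); split; [|split; [|split]].
  - by move=> n; move: (hL n); rewrite /bvo -!lock.
  - by move=> n; move: (hY n); rewrite /bvo -!lock.
  - by move=> n; move: (hM n); rewrite /bvo -!lock.
  - by move: hC; rewrite /bvo -!lock.
case=> alpha [h1 [h2 [h3 h4]]].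
have hP : forall b, phi (bvo b) = comb (P1 alpha j b).
  case=> [n|n|n|].
  - rewrite /P1 comb1 /=; move: (h1 n); rewrite [bv]lock; exact.
  - move: (h3 n); rewrite [bv]lock; exact.
  - rewrite /P1 comb1 /=; move: (h2 n); rewrite [bv]lock; exact.
  - move: h4; rewrite [bv]lock; exact.
split; [exact: (@back_hder mu alpha j phi hP) | exact: (@back_deg alpha j phi hP)].
Qed.
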